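(* Let $t$ be a partial function from $X^M$ to $X$ which is thrifty and belongs to $\mathscr C_J$. Then for every $n\in\omega$ the set $t^{-1}[\omega\times\{n\}]$ is bounded.
   Context: $X=\omega\times\omega$, elements $(a|b)$ ($x$-coordinate $a$, $y$-coordinate $b$); $M=\{1,\dots,m\}$. $J$ is the ideal of subsets of $X$ meeting each line $\omega\times\{n\}$ in a finite set; $\mathscr C_J$ is the set of finitary operations $f:X^k\to X$ with $f[A^k]\in J$ for all $A\in J$; a partial function from $X^M$ to $X$ is in $\mathscr C_J$ iff it has a total extension in $\mathscr C_J$. $B^M_k=\{u\in X^M:\exists i\in M\,((u_i)^y<k)\}$; a subset of $X^M$ is bounded iff contained in some $B^M_k$; $t$ is thrifty iff $t^{-1}[d]$ is bounded for all $d\in X$. *)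

(* Defs.v *)
From mathcomp Require Import all_boot.
Set Implicit Arguments. Unset Strict Implicit. Unset Printing Implicit Defensive.

(* X = omega x omega; a point (a|b) is the pair (a, b): x-coordinate a = .1,
   y-coordinate b = .2.  Subsets of X are predicates X -> Prop. *)
Definition X : Type := (nat * nat)%type.

Definition inJ (A : X -> Prop) : Prop :=
  forall n : nat, exists N : nat, forall a : nat, A (a, n) -> a < N.

(* X^M with M = {1,...,m} is represented as functions 'I_m -> X. *)
Definition XM (m : nat) : Type := 'I_m -> X.

Definition in_CJ_total (m : nat) (f : XM m -> X) : Prop :=
  forall A : X -> Prop, inJ A ->
    inJ (fun d => exists u : XM m, (forall i, A (u i)) /\ f u = d).

Definition pfun (m : nat) : Type := XM m -> option X.

Definition in_CJ (m : nat) (t : pfun m) : Prop :=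
  exists f : XM m -> X, in_CJ_total f /\ forall u d, t u = Some d -> f u = d.

Definition BMk (m k : nat) (u : XM m) : Prop := exists i : 'I_m, (u i).2 < k.

Definition bounded (m : nat) (S : XM m -> Prop) : Prop :=
  exists k : nat, forall u, S u -> BMk k u.

Definition tpreim (m : nat) (t : pfun m) (D : X -> Prop) : XM m -> Prop :=
  fun u => exists d, t u = Some d /\ D d.

Definition thrifty (m : nat) (t : pfun m) : Prop :=
  forall d : X, bounded (tpreim t (fun e : X => e = d)).

(* Main.v *)
Require Import Defs.
From Stdlib Require Import Classical ClassicalEpsilon.
From mathcomp Require Import all_boot.

Fixpoint Kf (bnd : nat -> nat) (k : nat) : nat :=
  match k with 0 => 0 | k'.+1 => Kf bnd k' + bnd k' + 1 end.

Lemma Kf_ge bnd k : k <= Kf bnd k.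
Proof. elim: k => //= k IH; rewrite addn1 ltnS; exact: leq_trans IH (leq_addr _ _). Qed.

Lemma Kf_mono bnd j k : j <= k -> Kf bnd j <= Kf bnd k.
Proof.
elim: k => [|k IH]; first by rewrite leqn0 => /eqP ->.
rewrite leq_eqVlt => /orP [/eqP -> //|]; rewrite ltnS => /IH H.
apply: leq_trans H _ => /=; rewrite -addnA; exact: leq_addr.
Qed.

Lemma Kf_bnd bnd a k : a < k -> bnd a <= Kf bnd k.
Proof.
move=> H; apply: (leq_trans _ (Kf_mono bnd _ _ H)) => /=.
rewrite -addnA addnC -addnA; exact: leq_addr.
Qed.

Theorem mainTheorem10 (m : nat) (t : pfun m) :
  thrifty t -> in_CJ t ->
  forall n : nat, bounded (tpreim t (fun d : X => d.2 = n)).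
Proof.
move=> Hth [f [Hf Hext]] n.
apply: NNPP => Hnb.
pose bnd a := proj1_sig (constructive_indefinite_description _ (Hth (a, n))).
have Hbnd : forall a u, tpreim t (fun e => e = (a, n)) u -> BMk (bnd a) u.
  move=> a; rewrite /bnd; case: (constructive_indefinite_description _ _) => //.
have Hw : forall k, exists u, tpreim t (fun d : X => d.2 = n) u /\
    forall i, Kf bnd k <= (u i).2.
  move=> k; apply: NNPP => Hn; apply: Hnb; exists (Kf bnd k) => u Su.
  apply: NNPP => Hb; apply: Hn; exists u; split => // i.
  rewrite leqNgt; apply/negP => Hi; apply: Hb; by exists i.
pose U k := proj1_sig (constructive_indefinite_description _ (Hw k)).
have HU : forall k, tpreim t (fun d : X => d.2 = n) (U k) /\
    forall i, Kf bnd k <= (U k i).2.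
  move=> k; rewrite /U; by case: (constructive_indefinite_description _ _).
have HUa : forall k, exists a, t (U k) = Some (a, n) /\ k <= a.
  move=> k; case: (HU k) => [[[a b] [Ht /= Hb]] Hy]; subst b.
  exists a; split => //; rewrite leqNgt; apply/negP => Hak.
  case: (Hbnd a (U k)) => [|i Hi]; first by exists (a, n).
  have := leq_trans Hi (Kf_bnd bnd _ _ Hak).
  by rewrite ltnNge Hy.
pose A (x : X) := exists k i, U k i = x.
have HA : inJ A.
  move=> j; exists (\max_(k < j.+1) \max_(i < m) (U k i).1).+1 => a [k [i Hki]].
  have Hk : k < j.+1.
    rewrite ltnS; apply: leq_trans (Kf_ge bnd k) _.
    by have := (HU k).2 i; rewrite Hki.
  rewrite ltnS.
  apply: leq_trans (leq_bigmax (Ordinal Hk)) => /=.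
  by have := leq_bigmax (F := fun i => (U k i).1) i; rewrite Hki.
case: (Hf A HA n) => N HN.
case: (HUa N) => a [Ht Ha].
have := HN a; rewrite -(Hext _ _ Ht) => H.
have := H (ex_intro _ (U N) (conj (fun i => ex_intro _ N (ex_intro _ i erefl)) erefl)).
by rewrite ltnNge Ha.
Qed.
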